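(* Given the power cost $P\geq 0$, the MMSE estimation cost for the ZEC coding scheme is \[ S_{\mathsf{ZEC}}(P) = 0, \quad \text{for } P\geq P^*, \] where \[ P^* = \min\{ P: \mathcal{A}^0(P) \neq\varnothing\}. \]
   Context: Setting: causal-encoding, noncausal-decoding vector-valued Witsenhausen counterexample with i.i.d. source $X_0\sim\mathcal{N}(0,Q)$ and channel noise $Z_1\sim\mathcal{N}(0,N)$, $Q,N>0$; state $X_1=X_0+U_1$, channel output $Y_1=X_1+Z_1$; power cost $P=\mathbb{E}[U_1^2]$, estimation cost $S=\mathbb{E}[(X_1-U_2)^2]$. By the single-letter coordination-coding characterization, a cost pair $(P,S)$ is achievable if there are auxiliary random variables $W_1$ (independent of $X_0$) and $W_2$ (depending on $(X_0,W_1)$), both made available to the noncausal decoder, satisfying $I(W_1,W_2;Y_1)-I(W_2;X_0|W_1)\geq 0$, with the decoder using the MMSE estimate $U_2=\mathbb{E}[X_1\mid W_1,W_2,Y_1]$. The ZEC scheme, for parameters $V_1\geq 0$, $a\geq 0$: $W_1\sim\mathcal{N}(0,V_1)$ independent of $X_0$; $W_2=a\cdot\mathrm{sign}(X_0)$; $U_1=W_1+a\cdot\mathrm{sign}(X_0)-X_0$; hence $X_1=W_1+W_2$ and $Y_1=W_1+W_2+Z_1$. Its power cost is $P=V_1+Q+a^2-2a\sqrt{2Q/\pi}$, and the information constraint becomes $h(Y_1)-\tfrac12\log_2(2\pi e N)-1\geq 0$ (in bits). The admissible parameter set is \[ \mathcal{A}^0(P) = \Big\{a\geq 0:\ h(Y_1)-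 \tfrac{1}{2}\log_2(2\pi eN) \geq 1,\ \text{and } V_1 = P - \Big(Q + a^2 - 2a\sqrt{\tfrac{2Q}{\pi}}\Big)\geq 0 \Big\}, \] where $h(Y_1)$ is the differential entropy (in bits) of the Gaussian mixture density \[ f_{Y_1}(y)= \frac{1}{2\sqrt{V_1+N}}\Big[\phi\Big(\tfrac{y-a}{\sqrt{V_1+N}}\Big)+\phi\Big(\tfrac{y+a}{\sqrt{V_1+N}}\Big)\Big], \] with $\phi(x)=\frac{1}{\sqrt{2\pi}}e^{-x^2/2}$ the standard Gaussian density. *)

(* Defs.v *)
From HB Require Import structures.
From mathcomp Require Import all_boot all_order all_algebra.
From mathcomp Require Import all_classical all_reals all_analysis.
Set Implicit Arguments. Unset Strict Implicit. Unset Printing Implicit Defensive.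
Import Order.TTheory GRing.Theory Num.Theory.
Import numFieldNormedType.Exports.
Local Open Scope classical_set_scope.
Local Open Scope ring_scope.

Section ZEC.
Context {R : realType}.

Definition log2 (x : R) : R := ln x / ln 2.

(* Expectation of a nonnegative (extended-real) function of a centered
   Gaussian variable of VARIANCE v >= 0; v = 0 is the degenerate law at 0. *)
Definition gaussE (v : R) (f : R -> \bar R) : \bar R :=
  if v == 0 then f 0
  else (\int[lebesgue_measure]_(x in [set: R])
          ((normal_pdf 0 (Num.sqrt v) x)%:E * f x))%E.

(* The ZEC scheme with parameters (a, V1):
   X0 ~ N(0,Q), W1 ~ N(0,V1), Z1 ~ N(0,N) independent,
   W2 = a sign(X0), X1 = W1 + W2, Y1 = X1 + Z1. *)
Definition zec_cost (Q N a V1 : R) (g : R * R * R -> R) : \bar R :=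
  gaussE Q (fun x0 => gaussE V1 (fun w1 => gaussE N (fun z1 =>
    let w2 := a * Num.sg x0 in
    let x1 := w1 + w2 in
    ((x1 - g (w1, w2, x1 + z1)) ^+ 2)%:E))).

(* MMSE: E[(X1 - E[X1 | W1,W2,Y1])^2], i.e. the least estimation cost over
   all (measurable) decoders of (W1,W2,Y1). *)
Definition zec_mmse (Q N a V1 : R) : \bar R :=
  ereal_inf [set zec_cost Q N a V1 g |
              g in [set g : R * R * R -> R | measurable_fun [set: R * R * R] g]].

(* density of Y1 = W1 + a sign(X0) + Z1 *)
Definition fY1 (N a V1 : R) (y : R) : R :=
  (normal_pdf a (Num.sqrt (V1 + N)) y + normal_pdf (- a) (Num.sqrt (V1 + N)) y) / 2.

Definition hY1 (N a V1 : R) : \bar R :=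
  (\int[lebesgue_measure]_(y in [set: R])
     (- (fY1 N a V1 y * log2 (fY1 N a V1 y)))%:E)%E.

Definition zec_V1 (Q P a : R) : R :=
  P - (Q + a ^+ 2 - 2 * a * Num.sqrt (2 * Q / pi)).

Definition A0 (Q N P : R) : set R :=
  [set a | 0 <= a /\ 0 <= zec_V1 Q P a /\
     (hY1 N a (zec_V1 Q P a)
        - (log2 (2 * pi * expR 1 * N) / 2)%:E >= 1)%E].

Definition S_ZEC (Q N P : R) : \bar R :=
  ereal_inf [set zec_mmse Q N a (zec_V1 Q P a) | a in A0 Q N P].

End ZEC.

(* Main.v *)
Require Import Defs.
From HB Require Import structures.
From mathcomp Require Import all_boot all_order all_algebra.
From mathcomp Require Import all_classical all_reals all_analysis.
Import Order.TTheory GRing.Theory Num.Theory.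
Local Open Scope classical_set_scope.
Local Open Scope ring_scope.
From mathcomp Require Import ring lra measurable_realfun.
Section S1.
Context {R : realType}.

Lemma npdfE (m v x : R) : 0 < v ->
  normal_pdf m (Num.sqrt v) x =
  (Num.sqrt (v * pi *+ 2))^-1 * expR (- (x - m) ^+ 2 / (v *+ 2)).
Proof.
move=> v0; rewrite normal_pdfE; last by rewrite gt_eqF ?sqrtr_gt0.
by rewrite /normal_peak /normal_fun sqr_sqrtr //; exact: ltW.
Qed.

Lemma normal_prod (m y g s d : R) : 0 < s -> 0 < d ->
  normal_pdf m (Num.sqrt s) (y - g) * normal_pdf 0 (Num.sqrt d) g =
  normal_pdf m (Num.sqrt (s + d)) y *
  normal_pdf ((y - m) * d / (s + d)) (Num.sqrt (s * d / (s + d))) g.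
Proof.
move=> s0 d0; have t0 : 0 < s + d by rewrite addr_gt0.
have e0 : 0 < s * d / (s + d) by rewrite divr_gt0 ?mulr_gt0.
rewrite !npdfE //.
rewrite mulrACA [in RHS]mulrACA -!expRD -!invfM.
rewrite -!sqrtrM ?mulrn_wge0 ?mulr_ge0 ?pi_ge0 ?ltW //.
congr (_ * _).
  congr (_^-1); congr Num.sqrt. move: (pi) => p. field. by rewrite gt_eqF.
congr expR. field. rewrite gt_eqF //= gt_eqF //= gt_eqF //.
Qed.
End S1.
Section S4.
Context {R : realType}.

Lemma ln_le_sub1 {y : R} : 0 < y -> ln y <= y - 1.
Proof.
move=> y0; have := @le_ln1Dx R (y - 1); rewrite [1 + _]addrC subrK; apply; lra.
Qed.

Lemma tangent (x m : R) : 0 <= x -> 0 < m -> - (x * ln x) <= m - x - x * ln m.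
Proof.
move=> x0 m0; have [->|xp] := eqVneq x 0; first by rewrite !mul0r oppr0 !addr0 ltW.
have xp' : 0 < x by rewrite lt_def xp x0.
have h := ln_le_sub1 (divr_gt0 m0 xp').
rewrite ln_div ?posrE // in h.
have : x * (ln m - ln x) <= x * (m / x - 1) by rewrite ler_pM2l.
rewrite mulrBr mulrBr mulrCA divff ?mulr1 ?mulr1 //; lra.
Qed.

Lemma absbound (x : R) : 0 <= x -> `|x * ln x| <= 2 * Num.sqrt x + x ^+ 2.
Proof.
move=> x0; have [->|xp] := eqVneq x 0; first by rewrite mul0r normr0 sqrtr0 expr0n /= mulr0 addr0.
have xp' : 0 < x by rewrite lt_def xp x0.
have sq0 : 0 < Num.sqrt x by rewrite sqrtr_gt0.
have [x1|x1] := leP x 1.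
  have lx : ln x <= 0 by rewrite ln_le0.
  rewrite ler0_norm; last by rewrite mulr_ge0_le0.
  have -> : ln x = 2 * ln (Num.sqrt x).
    by rewrite -{1}(sqr_sqrtr x0) lnXn // mulr_natl.
  have isq : 0 < (Num.sqrt x)^-1 by rewrite invr_gt0.
  have h := ln_le_sub1 isq.
  rewrite lnV ?posrE // in h.
  have e : x = Num.sqrt x * Num.sqrt x by rewrite -expr2 sqr_sqrtr.
  have : x * (- ln (Num.sqrt x)) <= x * ((Num.sqrt x)^-1 - 1) by rewrite ler_pM2l.
  have e2 : x * (Num.sqrt x)^-1 = Num.sqrt x by rewrite {1}e -mulrA divff ?gt_eqF // mulr1.
  rewrite mulrBr e2 mulr1 => h2.
  have := sqr_ge0 x; nra.
rewrite ger0_norm; last by rewrite mulr_ge0 // ln_ge0 // ltW.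
have := ln_sublinear xp'; have : 0 <= ln x by rewrite ln_ge0 // ltW.
have := sqrtr_ge0 x; rewrite expr2; nra.
Qed.
End S4.
Section S6.
Local Open Scope ereal_scope.
Context {R : realType}.
Local Notation mu := (@lebesgue_measure R).

Lemma shift_mu (c : R) (A : set R) : measurable A ->
  pushforward mu ((fun y : R => (y - c)%R) : _ -> measurableTypeR R) A = mu A.
Proof.
move=> mA; apply/esym/lebesgue_measure_unique => //=;
  first by apply: measurable_funD.
move=> _ _ [[x1 x2]] _ <-.

rewrite /pushforward.
have -> : (fun y : R => (y - c)%R) @^-1` `]x1, x2]%classic = `](x1 + c)%R, (x2 + c)%R]%classic.
  by apply/seteqP; split => y /=; rewrite !in_itv /= => /andP[h1 h2]; apply/andP; split; lra.
rewrite !lebesgue_measure_itv /= !lte_fin ltrD2r.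
case: ifP => // _.
by rewrite -!EFinD; congr (_%:E); ring.
Qed.

Lemma mshift (c : R) : measurable_fun [set: R] (fun y : R => (y - c)%R).
Proof. by apply: measurable_funD. Qed.

Lemma ge0_integral_shift (c : R) (h : R -> \bar R) : measurable_fun setT h ->
  (forall x, 0 <= h x) -> \int[mu]_y h (y - c)%R = \int[mu]_y h y.
Proof.
move=> mh h0.
pose phi := ((fun y : R => (y - c)%R) : _ -> measurableTypeR R).
have E : \int[mu]_y h y = \int[pushforward mu phi]_y h y.
  apply: eq_measure_integral; first exact: mshift.
  by move=> mf A mA _; symmetry; exact: shift_mu.
by rewrite E ge0_integral_pushforward //; last exact: mshift.
Qed.

Lemma integrable_shift (c : R) (h : R -> \bar R) : mu.-integrable setT h ->
  mu.-integrable setT (fun y => h (y - c)%R).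
Proof.
move=> /integrableP[mh hi]; apply/integrableP; split.
  by apply: measurableT_comp => //; exact: mshift.
rewrite (ge0_integral_shift c (fun y => `|h y|)) //.
exact: measurableT_comp.
Qed.

Lemma integral_shift (c : R) (h : R -> \bar R) : mu.-integrable setT h ->
  \int[mu]_y h (y - c)%R = \int[mu]_y h y.
Proof.
move=> hi; have mh := measurable_int _ hi.
pose phi := ((fun y : R => (y - c)%R) : _ -> measurableTypeR R).
have E : \int[mu]_y h y = \int[pushforward mu phi]_y h y.
  apply: eq_measure_integral; first exact: mshift.
  by move=> mf A mA _; symmetry; exact: shift_mu.
rewrite E integral_pushforward //; first exact: mshift.
exact: integrable_shift.
Qed.
End S6.
Section S7.
Local Open Scope ereal_scope.
Context {R : realType}.
Local Notation mu := (@lebesgue_measure R).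

Definition nn (m v y : R) : R := normal_pdf m (Num.sqrt v) y.
Definition ff (a v y : R) : R := ((nn a v y + nn (- a) v y) / 2)%R.
Definition psi (x : R) : R := (- (x * log2 x))%R.
Definition pk (v : R) : R := ((Num.sqrt (v * pi *+ 2))^-1)%R.

Lemma pk_gt0 v : (0 < v)%R -> (0 < pk v)%R.
Proof. by move=> v0; rewrite invr_gt0 sqrtr_gt0 pmulrn_lgt0 // mulr_gt0 // pi_gt0. Qed.

Lemma nn_gt0 m v y : (0 < v)%R -> (0 < nn m v y)%R.
Proof. by move=> v0; rewrite /nn npdfE // mulr_gt0 ?expR_gt0 // pk_gt0. Qed.

Lemma nn_le m v y : (0 < v)%R -> (nn m v y <= pk v)%R.
Proof.
move=> v0; rewrite /nn npdfE // -[X in (_ <= X)%R]mulr1; apply: ler_wpM2l.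
  exact/ltW/pk_gt0.
by rewrite expR_le1 mulNr oppr_le0 divr_ge0 ?sqr_ge0 // mulrn_wge0 // ltW.
Qed.

Lemma mnn m v : measurable_fun [set: R] (nn m v).
Proof. exact: measurable_normal_pdf. Qed.

Lemma nn_int m v : mu.-integrable [set: R] (fun y => (nn m v y)%:E).
Proof. exact: integrable_normal_pdf. Qed.

Lemma nn_integral m v : \int[mu]_y (nn m v y)%:E = 1.
Proof. exact: integral_normal_pdf. Qed.

Lemma ff_gt0 a v y : (0 < v)%R -> (0 < ff a v y)%R.
Proof. by move=> v0; rewrite /ff divr_gt0 // addr_gt0 // nn_gt0. Qed.

Lemma ff_le a v y : (0 < v)%R -> (ff a v y <= pk v)%R.
Proof.
move=> v0; rewrite /ff ler_pdivrMr //.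
by have := nn_le a v y v0; have := nn_le (- a) v y v0; rewrite mulr_natr mulr2n; lra.
Qed.

Lemma mff a v : measurable_fun [set: R] (ff a v).
Proof.
apply: measurable_funM; last exact: measurable_cst.
by apply: measurable_funD; exact: mnn.
Qed.

Lemma mpsi : measurable_fun [set: R] psi.
Proof.
apply: measurable_funN; apply: measurable_funM => //.
apply: measurable_funM; last exact: measurable_cst.
exact: measurable_ln.
Qed.

Lemma int_add (f g : R -> R) : mu.-integrable [set: R] (fun y => (f y)%:E) ->
  mu.-integrable [set: R] (fun y => (g y)%:E) ->
  mu.-integrable [set: R] (fun y => (f y + g y)%R%:E).
Proof. by move=> hf hg; apply: (eq_integrable measurableT _ _ _ (integrableD measurableT hf hg)) => y _ /=; rewrite EFinD. Qed.

Lemma int_scale (k : R) (f : R -> R) : mu.-integrable [set: R] (fun y => (f y)%:E) ->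
  mu.-integrable [set: R] (fun y => (k * f y)%R%:E).
Proof. by move=> hf; apply: (eq_integrable measurableT _ _ _ (integrableZl measurableT k hf)) => y _ /=; rewrite EFinM. Qed.


Lemma sqrt_nn m v y : (0 < v)%R ->
  Num.sqrt (nn m v y) = (Num.sqrt (pk v) / pk (v *+ 2) * nn m (v *+ 2) y)%R.
Proof.
move=> v0; have v2 : (0 < v *+ 2)%R by rewrite pmulrn_lgt0.
rewrite /nn !npdfE // -/(pk v) -/(pk (v *+ 2)).
transitivity (Num.sqrt (pk v) * expR (- (y - m) ^+ 2 / (v *+ 2 *+ 2)))%R; last first.
  by field; rewrite gt_eqF ?pk_gt0.
rewrite sqrtrM ?ltW ?pk_gt0 //; congr (_ * _)%R.
set z := (- (y - m) ^+ 2 / (v *+ 2 *+ 2))%R.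
have -> : (- (y - m) ^+ 2 / (v *+ 2))%R = (z * 2%:R)%R.
  rewrite /z; field; rewrite gt_eqF //.
by rewrite expRM_natr sqrtr_sqr ger0_norm // expR_ge0.
Qed.

Lemma sqrt_add_le (p q : R) : (0 <= p)%R -> (0 <= q)%R ->
  (Num.sqrt (p + q) <= Num.sqrt p + Num.sqrt q)%R.
Proof.
move=> p0 q0.
have h : (p + q <= (Num.sqrt p + Num.sqrt q) ^+ 2)%R.
  rewrite sqrrD !sqr_sqrtr //; have := sqrtr_ge0 p; have := sqrtr_ge0 q; nra.
by have := ler_wsqrtr h; rewrite sqrtr_sqr ger0_norm // addr_ge0 ?sqrtr_ge0.
Qed.

Lemma ln2_gt0 : (0 < ln (2 : R))%R.
Proof. by rewrite ln_gt0 // ltr1n. Qed.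

Lemma psi_bound a v y : (0 < v)%R ->
  (`|psi (ff a v y)| <= (2 * (Num.sqrt (pk v) / pk (v *+ 2)) / ln 2) *
      (nn a (v *+ 2) y + nn (- a) (v *+ 2) y) +
    (pk v / ln 2 / 2) * (nn a v y + nn (- a) v y))%R.
Proof.
move=> v0; set x := ff a v y.
have x0 : (0 <= x)%R by exact/ltW/ff_gt0.
have xK : (x <= pk v)%R by exact: ff_le.
have l2 := @ln2_gt0.
have e : (`|psi x| = `|x * ln x| / ln 2)%R.
  have il : (0 < (ln (2:R))^-1)%R by rewrite invr_gt0.
  by rewrite /psi /log2 normrN mulrA normrM (ger0_norm (ltW il)).
rewrite e ler_pdivrMr //.
have hb := absbound x x0.
have hs : (Num.sqrt x <= Num.sqrt (nn a v y) + Num.sqrt (nn (- a) v y))%R.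
  apply: le_trans (sqrt_add_le _ _ (ltW (nn_gt0 _ _ _ v0)) (ltW (nn_gt0 _ _ _ v0))).
  apply: ler_wsqrtr.
  rewrite /x /ff; have := nn_gt0 a v y v0; have := nn_gt0 (- a) v y v0; lra.
rewrite !sqrt_nn // in hs.
have hx2 : (x ^+ 2 <= pk v * x)%R by rewrite expr2 ler_wpM2r.
have ex : (x = (nn a v y + nn (- a) v y) / 2)%R by [].
set C := (Num.sqrt (pk v) / pk (v *+ 2))%R in hs *.
set n1 := nn a (v *+ 2) y in hs *; set n2 := nn (- a) (v *+ 2) y in hs *.
set P := (nn a v y + nn (- a) v y)%R in ex *.
have -> : ((2 * C / ln 2 * (n1 + n2) + pk v / ln 2 / 2 * P) * ln 2 =
   2 * (C * n1 + C * n2) + pk v * (P / 2))%R.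
  by field; rewrite gt_eqF.
rewrite -ex; lra.
Qed.


Lemma psi_int a v : (0 < v)%R -> mu.-integrable [set: R] (fun y => (psi (ff a v y))%:E).
Proof.
move=> v0.
apply: (@le_integrable _ _ _ mu _ measurableT _ (fun y => ((2 * (Num.sqrt (pk v) / pk (v *+ 2)) / ln 2) *
      (nn a (v *+ 2) y + nn (- a) (v *+ 2) y) +
    (pk v / ln 2 / 2) * (nn a v y + nn (- a) v y))%R%:E)).
- apply/measurable_EFinP; apply: measurableT_comp; [exact: mpsi | exact: mff].
- move=> y _; rewrite !abse_EFin lee_fin; apply: le_trans (psi_bound a v y v0) _.
  exact: ler_norm.
- by apply: int_add; apply: int_scale; apply: int_add; exact: nn_int.
Qed.

Lemma conv_ff a s d y : (0 < s)%R -> (0 < d)%R ->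
  \int[mu]_g (ff a s (y - g) * nn 0 d g)%:E = (ff a (s + d) y)%:E.
Proof.
move=> s0 d0.
set e := (s * d / (s + d))%R.
set c1 := ((y - a) * d / (s + d))%R.
set c2 := ((y - - a) * d / (s + d))%R.
have E : forall g, (ff a s (y - g) * nn 0 d g)%:E =
   (nn a (s + d) y / 2)%:E * (nn c1 e g)%:E + (nn (- a) (s + d) y / 2)%:E * (nn c2 e g)%:E.
  move=> g; rewrite -!EFinM -EFinD; congr EFin.
  have h1 := normal_prod a y g s d s0 d0; have h2 := normal_prod (- a) y g s d s0 d0.
  rewrite /ff /nn -/e -/c1 -/c2 in h1 h2 *.
  set A := normal_pdf a _ (y - g) in h1 *.
  set B := normal_pdf (- a) _ (y - g) in h2 *.
  set N := normal_pdf 0 _ g in h1 h2 *.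
  rewrite mulrAC mulrDl h1 h2; ring.
under eq_integral do rewrite E.
rewrite integralD //; last 2 first.
- exact: integrableZl (nn_int _ _).
- exact: integrableZl (nn_int _ _).
rewrite !integralZl //; try exact: nn_int.
by rewrite !nn_integral !mule1 -EFinD /ff mulrDl.
Qed.

Lemma psi_abs_le (x K : R) : (0 <= x)%R -> (x <= K)%R ->
  (`|psi x| <= (2 * Num.sqrt K + K ^+ 2) / ln 2)%R.
Proof.
move=> x0 xK; have l2 := @ln2_gt0.
have il : (0 < (ln (2:R))^-1)%R by rewrite invr_gt0.
rewrite /psi /log2 normrN mulrA normrM (ger0_norm (ltW il)).
apply: ler_wpM2r; first exact: ltW.
apply: le_trans (absbound x x0) _.
have := ler_wsqrtr xK; have : (x ^+ 2 <= K ^+ 2)%R.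
  by rewrite !expr2; apply: ler_pM.
lra.
Qed.

Lemma bnd_int (f : R -> R) (B d : R) : measurable_fun [set: R] f ->
  (forall g, `|f g| <= B)%R ->
  mu.-integrable [set: R] (fun g => (f g * nn 0 d g)%:E).
Proof.
move=> mf fB.
have B0 : (0 <= B)%R by apply: le_trans (fB 0%R); exact: normr_ge0.
apply: (@le_integrable _ _ _ mu _ measurableT _ (fun g => (B * nn 0 d g)%R%:E)).
- by apply/measurable_EFinP; apply: measurable_funM => //; exact: mnn.
- move=> g _; rewrite !abse_EFin lee_fin normrM [X in (_ <= X)%R]normrM.
  rewrite (ger0_norm B0) ler_wpM2r //; exact: normr_ge0.
- by apply: int_scale; exact: nn_int.
Qed.

Lemma mff_shift a s y : measurable_fun [set: R] (fun g => ff a s (y - g)).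
Proof.
apply: measurableT_comp; first exact: mff.
by apply: measurable_funB => //; exact: measurable_cst.
Qed.

Lemma inner_le a s d y : (0 < s)%R -> (0 < d)%R ->
  \int[mu]_g (psi (ff a s (y - g)) * nn 0 d g)%:E <= (psi (ff a (s + d) y))%:E.
Proof.
move=> s0 d0; have l2 := @ln2_gt0.
have t0 : (0 < s + d)%R by rewrite addr_gt0.
set w := ff a (s + d) y.
have w0 : (0 < w)%R by exact: ff_gt0.
have i1 : mu.-integrable [set: R] (fun g => (psi (ff a s (y - g)) * nn 0 d g)%:E).
  apply: (@bnd_int _ ((2 * Num.sqrt (pk s) + pk s ^+ 2) / ln 2)).
    by apply: measurableT_comp; [exact: mpsi | exact: mff_shift].
  move=> g; apply: psi_abs_le; first exact/ltW/ff_gt0.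
  exact: ff_le.
have i2 : mu.-integrable [set: R] (fun g => (ff a s (y - g) * nn 0 d g)%:E).
  apply: (@bnd_int _ (pk s)); first exact: mff_shift.
  by move=> g; rewrite ger0_norm ?ff_le // ltW // ff_gt0.
have i3 : mu.-integrable [set: R] (fun g =>
    ((w / ln 2)%:E * (nn 0 d g)%:E + (- ((1 + ln w) / ln 2))%:E * (ff a s (y - g) * nn 0 d g)%:E)).
  by apply: (integrableD measurableT); apply: (integrableZl measurableT) => //; exact: nn_int.
apply: le_trans (le_integral measurableT i1 i3 _) _.
  move=> g _; rewrite -!EFinM -EFinD lee_fin.
  have hx : (0 <= ff a s (y - g))%R by exact/ltW/ff_gt0.
  have ht := tangent (ff a s (y - g)) w hx w0.
  have hn : (0 <= nn 0 d g)%R by exact/ltW/nn_gt0.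
  rewrite /psi /log2.
  set x := ff a s (y - g) in ht hx *; set n := nn 0 d g in hn *.
  have -> : (w / ln 2 * n + - ((1 + ln w) / ln 2) * (x * n) =
     ((w - x - x * ln w) / ln 2) * n)%R by field; rewrite gt_eqF.
  apply: ler_wpM2r => //.
  have -> : (- (x * (ln x / ln 2)) = - (x * ln x) / ln 2)%R by field; rewrite gt_eqF.
  by rewrite ler_pM2r // invr_gt0.
rewrite integralD //; last 2 first.
- by apply: (integrableZl measurableT); exact: nn_int.
- exact: (integrableZl measurableT).
rewrite !integralZl //; last exact: nn_int.
rewrite nn_integral conv_ff // -/w mule1 -EFinM -EFinD lee_fin /psi /log2.
by rewrite le_eqVlt; apply/orP; left; apply/eqP; field; rewrite gt_eqF.
Qed.

Lemma mono a s d : (0 < s)%R -> (0 < d)%R ->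
  \int[mu]_y (psi (ff a s y))%:E <= \int[mu]_y (psi (ff a (s + d) y))%:E.
Proof.
move=> s0 d0; have t0 : (0 < s + d)%R by rewrite addr_gt0.
pose F : R * R -> \bar R := fun z => (psi (ff a s (z.1 - z.2)) * nn 0 d z.2)%:E.
have mF : measurable_fun [set: R * R] F.
  apply/measurable_EFinP; apply: measurable_funM.
    apply: measurableT_comp; first exact: mpsi.
    apply: measurableT_comp; first exact: mff.
    exact: measurable_funB.
  by apply: measurableT_comp; [exact: mnn | exact: measurable_snd].
have ips := psi_int a s s0.
have ipt := psi_int a (s + d)%R t0.
set Hs := \int[mu]_y (psi (ff a s y))%:E.
have Hsf : Hs \is a fin_num by exact: integrable_fin_num.
set Ca := \int[mu]_y `|psi (ff a s y)|%:E.
have Caf : Ca < +oo.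
  case/integrableP: ips => _; rewrite /Ca.
  by under eq_integral do rewrite abse_EFin.
have Ca0 : 0 <= Ca by apply: integral_ge0 => y _; rewrite lee_fin.
have CaE : Ca = (fine Ca)%:E by rewrite fineK // ge0_fin_numE.
have iF : (mu \x mu).-integrable [set: R * R] F.
  apply/(integrable21ltyP mu mu mF).
  have inner : forall g, \int[mu]_y `|F (y, g)| = Ca * (nn 0 d g)%:E.
    move=> g; rewrite /F /=.
    have n0 : (0 <= nn 0 d g)%R by exact/ltW/nn_gt0.
    under eq_integral do rewrite normrM (ger0_norm n0) EFinM.
    have MF : measurable_fun [set: R] (fun y => `|psi (ff a s (y - g))|%:E).
      apply/measurable_EFinP; apply: measurableT_comp => //.
      apply: measurableT_comp; first exact: mpsi.
      exact: (measurableT_comp (mff a s) (mshift g)).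
    have F0 : forall y, [set: R] y -> 0 <= `|psi (ff a s (y - g))|%:E.
      by move=> y _; rewrite lee_fin.
    have K0 : 0 <= (nn 0 d g)%:E by rewrite lee_fin.
    rewrite (@ge0_integralZr _ _ _ mu setT measurableT (fun y => `|psi (ff a s (y - g))|%:E) MF (nn 0 d g)%:E F0 K0).
    have HS : \int[mu]_y `|psi (ff a s (y - g))|%:E = Ca.
      apply: (ge0_integral_shift g (fun y => `|psi (ff a s y)|%:E)).
        apply/measurable_EFinP; apply: measurableT_comp => //.
        apply: measurableT_comp; [exact: mpsi | exact: mff].
      by move=> y; rewrite lee_fin.
    by rewrite HS.
  under eq_integral do rewrite inner.
  have m1 : measurable_fun [set: R] (fun g => (nn 0 d g)%:E) by apply/measurable_EFinP; exact: mnn.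
  have p1 : forall g, [set: R] g -> 0 <= (nn 0 d g)%:E by move=> g _; rewrite lee_fin ltW // nn_gt0.
  have k0 : 0 <= (fine Ca)%:E by rewrite -CaE.
  rewrite CaE ge0_integralZl //.
  by rewrite nn_integral mule1 ltry.
have RHS : \int[mu]_g \int[mu]_y F (y, g) = Hs.
  have inner : forall g, \int[mu]_y F (y, g) = (fine Hs * nn 0 d g)%:E.
    move=> g; rewrite /F /=.
    under eq_integral do rewrite EFinM.
    rewrite integralZr //; last exact: (integrable_shift g _ ips).
    by rewrite (integral_shift g _ ips) -/Hs -{1}(fineK Hsf) -EFinM.
  under eq_integral do rewrite inner.
  under eq_integral do rewrite EFinM.
  by rewrite integralZl //; [rewrite nn_integral mule1 fineK | exact: nn_int].
rewrite -RHS -(Fubini iF).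
apply: le_integral => //; first exact: (integrable_fubini_F iF).
by move=> y _; rewrite /fubini_F /F /=; exact: inner_le.
Qed.

End S7.
Section S9.
Local Open Scope ereal_scope.
Context {R : realType}.
Local Notation mu := (@lebesgue_measure R).

Lemma gaussE_ge0 (v : R) (f : R -> \bar R) : (forall x, 0 <= f x) -> 0 <= gaussE v f.
Proof.
move=> f0; rewrite /gaussE; case: ifP => _; first exact: f0.
apply: integral_ge0 => x _; apply: mule_ge0 => //.
by rewrite lee_fin normal_pdf_ge0.
Qed.

Lemma gaussE_0 (v : R) (f : R -> \bar R) : (forall x, f x = 0) -> gaussE v f = 0.
Proof.
move=> f0; rewrite /gaussE; case: ifP => _; first exact: f0.
under eq_integral do rewrite f0 mule0.
exact: integral0.
Qed.

Lemma zec_mmse0 (Q N a V1 : R) : zec_mmse Q N a V1 = 0.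
Proof.
apply/eqP; rewrite eq_le; apply/andP; split.
  apply: ereal_inf_lbound; exists (fun p : R * R * R => (p.1.1 + p.1.2)%R).
    rewrite /=; apply: measurable_funD.
      exact: (measurableT_comp measurable_fst measurable_fst).
    exact: (measurableT_comp measurable_snd measurable_fst).
  rewrite /zec_cost; apply: gaussE_0 => x0; apply: gaussE_0 => w1.
  by apply: gaussE_0 => z1 /=; rewrite subrr expr0n.
apply: le_ereal_inf_tmp => _ [g _ <-].
rewrite /zec_cost; apply: gaussE_ge0 => x0; apply: gaussE_ge0 => w1.
by apply: gaussE_ge0 => z1; rewrite lee_fin sqr_ge0.
Qed.

End S9.

Theorem theorem3 (R : realType) (Q N Pstar P : R) :
  0 < Q -> 0 < N ->
  (* Pstar = min { P : A^0(P) <> empty } *)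
  A0 Q N Pstar !=set0 ->
  (forall P' : R, A0 Q N P' !=set0 -> Pstar <= P') ->
  0 <= P -> Pstar <= P ->
  S_ZEC Q N P = 0%E.
Proof.
move=> Q0 N0 [a [a0 [V0 hA]]] _ _ PP.
have aA : A0 Q N P a.
  split; first exact: a0.
  have VE : zec_V1 Q P a = (zec_V1 Q Pstar a + (P - Pstar))%R.
    by rewrite /zec_V1; ring.
  split; first by rewrite VE; apply: addr_ge0 => //; rewrite subr_ge0.
  apply: le_trans hA _; apply: leeD2r.
  have [->//|ne] := eqVneq P Pstar.
  have d0 : (0 < P - Pstar)%R by rewrite subr_gt0 lt_def ne PP.
  have s0 : (0 < zec_V1 Q Pstar a + N)%R by move: V0 N0; set V := zec_V1 _ _ _; lra.
  have := mono a _ _ s0 d0.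
  rewrite /hY1 /fY1 VE.
  have -> : (zec_V1 Q Pstar a + (P - Pstar) + N = zec_V1 Q Pstar a + N + (P - Pstar))%R by ring.
  by [].
apply/eqP; rewrite eq_le; apply/andP; split.
  by apply: ereal_inf_lbound; exists a => //; rewrite zec_mmse0.
by apply: le_ereal_inf_tmp => _ [b _ <-]; rewrite zec_mmse0.
Qed.
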